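(* For every integer $n\geq 1$, \[ (n+1)^{n-1}=\sum_{T}\frac{n!}{2^n}\prod_{v\in T}\left(1+\frac{1}{h(v)}\right), \] where the sum ranges over all (unlabeled) binary trees $T$ with $n$ vertices.
   Context: A binary tree is a rooted tree in which each vertex has a left subtree and a right subtree, each possibly empty; binary trees differing in whether a child is a left or a right child are distinct. For a vertex $v$ of a binary tree $T$, the hook length $h(v)$ is the number of descendants of $v$ in $T$, including $v$ itself. *)

(* Defs.v *)
From HB Require Import structures.
From mathcomp Require Import all_boot all_order all_algebra.
Set Implicit Arguments. Unset Strict Implicit. Unset Printing Implicit Defensive.
Import Order.TTheory GRing.Theory Num.Theory.

Inductive bintree : Type :=
| Leaf : bintree                    (* the empty tree *)
| Node : bintree -> bintree -> bintree.

Fixpoint bt_eqb (s t : bintree) : bool :=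
  match s, t with
  | Leaf, Leaf => true
  | Node l1 r1, Node l2 r2 => bt_eqb l1 l2 && bt_eqb r1 r2
  | _, _ => false
  end.

Lemma bt_eqbP : Equality.axiom bt_eqb.
Proof.
elim=> [|l1 IHl r1 IHr] [|l2 r2] /=; try by constructor.
apply: (iffP andP) => [[/IHl -> /IHr ->]|[<- <-]] //.
by split; [apply/IHl|apply/IHr].
Qed.

HB.instance Definition _ := hasDecEq.Build bintree bt_eqbP.

Fixpoint bt_size (t : bintree) : nat :=
  match t with
  | Leaf => 0
  | Node l r => (bt_size l + bt_size r).+1
  end.

(* hook lengths: the multiset of h(v) over the vertices v of t,
   h(v) = number of descendants of v (including v) = size of subtree at v *)
Fixpoint hooks (t : bintree) : seq nat :=
  match t with
  | Leaf => [::]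
  | Node l r => bt_size t :: (hooks l ++ hooks r)
  end.

Local Open Scope ring_scope.

Definition hook_prod (t : bintree) : rat :=
  \prod_(h <- hooks t) (1 + (h%:R)^-1).

(* Main.v *)
Require Import Defs.
From mathcomp Require Import all_boot all_order all_algebra ring lra.
Import GRing.Theory Num.Theory. Local Open Scope ring_scope.
Lemma pascal_alt (m : nat) (f : nat -> rat) :
  \sum_(k < m.+2) (-1)^+k * 'C(m.+1, k)%:R * f k =
  \sum_(k < m.+1) (-1)^+k * 'C(m, k)%:R * (f k - f k.+1).
Proof.
rewrite big_ord_recl /= bin0 expr0 !mul1r.
under eq_bigr => i _ do rewrite /bump /= add1n binS natrD mulrDr mulrDl.
rewrite big_split /= addrA.
have -> : f 0%N + \sum_(i < m.+1) (-1) ^+ i.+1 * 'C(m, i.+1)%:R * f i.+1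
   = \sum_(k < m.+1) (-1)^+k * 'C(m, k)%:R * f k.
  rewrite [RHS]big_ord_recl /= bin0 expr0 !mul1r; congr (_ + _).
  rewrite big_ord_recr /= bin_small // mulr0 mul0r addr0.
  by apply: eq_bigr => i _; rewrite /bump /= add1n.
rewrite -big_split /=; apply: eq_bigr => i _. rewrite exprS. ring.
Qed.

Lemma fd (m j : nat) (x : rat) : (j < m)%N ->
  \sum_(k < m.+1) (-1)^+k * 'C(m, k)%:R * (x + k%:R)^+j = 0.
Proof.
elim: m j x => [|m IH] j x // hj.
rewrite (pascal_alt m (fun k => (x + k%:R)^+j)) /=.
transitivity (\sum_(k < m.+1) (-1)^+k * 'C(m, k)%:R *
    (- \sum_(i < j) 'C(j, i)%:R * (x + k%:R)^+i)).
  apply: eq_bigr => k _; congr (_ * _).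
  rewrite -natr1 addrA exprD1n big_ord_recr /= binn mulr1n.
  rewrite opprD addrCA subrr addr0; congr (- _); apply: eq_bigr => i _; by rewrite mulr_natl.
under eq_bigr => k _ do rewrite mulrN mulr_sumr.
rewrite sumrN exchange_big /= big1 ?oppr0 // => i _.
have h0 := IH i x (leq_trans (ltn_ord i) _ : (i < m)%N).
transitivity ('C(j, i)%:R * \sum_(k < m.+1) (-1)^+k * 'C(m, k)%:R * (x + k%:R)^+i);
  last by rewrite h0 ?mulr0.
rewrite mulr_sumr; apply eq_bigr => k _; ring.
Qed.
Lemma deriv_shift (a : rat) m : (('X + a%:P)^+m)^`() = ('X + a%:P)^+m.-1 *+ m.
Proof. by rewrite deriv_exp derivD derivX derivC addr0 mul1r. Qed.

Lemma const_of_deriv (p : {poly rat}) a : p^`() = 0 -> p = (p.[a])%:P.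
Proof.
move=> h.
have hc : forall i, p`_i.+1 = 0.
  move=> i; have := coef_deriv p i; rewrite h coef0 => /esym/eqP.
  by rewrite mulrn_eq0 /= => /eqP.
have -> : p = (p`_0)%:P.
  apply/polyP => i; rewrite coefC; case: i => [|i] //=.
by rewrite hornerC.
Qed.

Definition cf (n k : nat) : rat := ('C(n, k) * (k.+1)^(k.-1))%N%:R.
Definition Bp (n : nat) (c : rat) : {poly rat} :=
  \sum_(k < n.+1) cf n k *: ('X + (c + (n - k)%N%:R)%:P)^+(n - k).

Lemma deriv_Bp n c : (Bp n.+1 c)^`() = Bp n (c + 1) *+ n.+1.
Proof.
rewrite /Bp raddf_sum big_ord_recr /= subnn expr0 derivZ derivC scaler0 addr0.
rewrite -sumrMnl; apply: eq_bigr => k _.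
rewrite derivZ deriv_shift.
have hk : (k <= n)%N by rewrite -ltnS.
rewrite subSn // /=.
have -> : c + ((n - k).+1)%:R = c + 1 + (n - k)%:R by rewrite -natr1; ring.
rewrite -scalerMnr !scalerMnl; congr (_ *: _).
rewrite /cf -!mulrnA; congr (_%:R).
have := mul_bin_down n.+1 k; rewrite /= subSn // => h.
by rewrite [LHS]mulnAC [RHS]mulnAC (mulnC 'C(n.+1,k)) (mulnC 'C(n,k)) h.
Qed.

Lemma sign_sub (m k : nat) : (k <= m)%N -> (-1)^+(m - k) = (-1)^+m * (-1)^+k :> rat.
Proof.
move=> hk; rewrite -{2}(subnK hk) exprD -mulrA -expr2 -exprM mulnC exprM.
by rewrite sqrrN expr1n expr1n mulr1 || by rewrite sqrrN !expr1n mulr1.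
Qed.

Lemma Bp_anchor n c : (Bp n.+1 c).[- (c + n.+2%:R)] = 0.
Proof.
rewrite /Bp horner_sum.
transitivity ((-1)^+n.+1 * \sum_(k < n.+2) (-1)^+k * 'C(n.+1, k)%:R * (1 + k%:R)^+n : rat).
  rewrite mulr_sumr; apply: eq_bigr => k _.
  have hk : (k <= n.+1)%N by rewrite -ltnS.
  rewrite hornerZ horner_exp hornerD hornerX hornerC.
  have -> : - (c + n.+2%:R) + (c + (n.+1 - k)%:R) = - (1 + k%:R).
    by rewrite natrB // -!natr1; ring.
  rewrite (exprNn (1 + k%:R)) sign_sub // /cf natrM natrX mulrA !(addrC 1 (k%:R)) natr1.
  case: (nat_of_ord k) hk => [|k'] hk /=.
    by rewrite !expr1n; ring.
  rewrite (_ : (n.+1 - k'.+1 = n - k')%N) //.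
  have -> : (k'.+2%:R ^+ n : rat) = k'.+2%:R ^+ k' * k'.+2%:R ^+ (n - k').
    by rewrite -exprD subnKC.
  ring.
by rewrite fd // mulr0.
Qed.

Lemma abel n c : Bp n c = ('X + (c + n.+1%:R)%:P)^+n.
Proof.
elim: n c => [|n IH] c.
  by rewrite /Bp big_ord1 /cf /= expr0 scale1r.
apply/eqP; rewrite -subr_eq0; apply/eqP.
set D := _ - _.
have hD : D^`() = 0.
  rewrite /D derivB deriv_Bp deriv_shift IH /=.
  have -> : c + 1 + n.+1%:R = c + n.+2%:R by rewrite -[n.+2%:R]natr1 -[n.+1%:R]natr1; ring.
  by rewrite subrr.
rewrite (@const_of_deriv D (- (c + n.+2%:R)) hD : D = _) /D hornerD hornerN Bp_anchor.
by rewrite horner_exp hornerD hornerX hornerC addNr expr0n /= subrr.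
Qed.

Lemma Bp0 n c : \sum_(k < n.+1) cf n k * (c + (n - k)%N%:R)^+(n - k) = (c + n.+1%:R)^+n.
Proof.
have := congr1 (fun p => p.[0]) (abel n c); rewrite /= /Bp horner_sum.
rewrite horner_exp hornerD hornerX hornerC add0r => <-.
apply: eq_bigr => k _; by rewrite hornerZ horner_exp hornerD hornerX hornerC add0r.
Qed.

Lemma cf_down n k : (k <= n)%N -> cf n.+1 k * (n.+1 - k)%N%:R = n.+1%:R * cf n k.
Proof.
move=> hk; rewrite /cf -!natrM; congr (_%:R).
have := mul_bin_down n.+1 k; rewrite /= => h.
by rewrite mulnAC (mulnC 'C(n.+1,k)) -h mulnA.
Qed.

Definition Aval (m : nat) : rat :=
  \sum_(k < m.+1) ('C(m, k) * (k.+1)^(k.-1) * (m - k).+1^((m - k).-1))%N%:R.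

Lemma pow_split (j : nat) : ((j.+1)^(j.-1))%N%:R = (1 + j%:R)^+j - j%:R * (1 + j%:R)^+(j.-1) :> rat.
Proof.
case: j => [|j] /=; first by rewrite expr0 mul0r subr0.
rewrite natrX -natr1 exprS -mulrBl addrK mul1r; by rewrite addrC.
Qed.

Lemma A_id m : Aval m * m.+2%:R = 2 * m.+2%:R ^+ m.
Proof.
case: m => [|m].
  by rewrite /Aval big_ord1 /= mul1r mulr1.
have E1 := Bp0 m.+1 1.
have E2 := Bp0 m 2.
have -> : Aval m.+1 = (1 + m.+2%:R)^+m.+1 - m.+1%:R * (2 + m.+1%:R)^+m.
  rewrite -E1 -E2 mulr_sumr /Aval.
  transitivity (\sum_(k < m.+2) (cf m.+1 k * (1 + (m.+1 - k)%N%:R)^+(m.+1 - k)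
       - cf m.+1 k * (m.+1 - k)%N%:R * (1 + (m.+1 - k)%N%:R)^+(m.+1 - k).-1)).
    apply: eq_bigr => k _; rewrite natrM pow_split /cf; ring.
  rewrite sumrB; congr (_ - _).
  rewrite big_ord_recr /= subnn mulr0 mul0r addr0.
  apply: eq_bigr => k _.
  have hk : (k <= m)%N by rewrite -ltnS.
  rewrite cf_down // subSn //= -mulrA; congr (_ * (_ * _)).
  by congr (_ ^+ _); rewrite -natr1; lra.
have e1 : 1 + m.+2%:R = m.+3%:R :> rat by rewrite addrC natr1.
have e2 : 2 + m.+1%:R = m.+3%:R :> rat.
  by rewrite -[m.+3%:R]natr1 -[m.+2%:R]natr1; lra.
rewrite e1 e2 exprS; set y := m.+3%:R ^+ m.
rewrite -[m.+3%:R]natr1 -[m.+2%:R]natr1; ring.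
Qed.

Fixpoint tr (f n : nat) : seq bintree :=
  match f with
  | 0 => [:: Leaf]
  | f'.+1 => match n with
     | 0 => [:: Leaf]
     | m.+1 => [seq Node x.1 x.2 | i <- iota 0 m.+1,
                  x <- [seq (l, r) | l <- tr f' i, r <- tr f' (m - i)]]
     end
  end.

Lemma hp_node l r : hook_prod (Node l r) =
  (1 + ((bt_size l + bt_size r).+1)%:R^-1) * (hook_prod l * hook_prod r).
Proof. by rewrite /hook_prod /= big_cons big_cat. Qed.

Lemma tr_S f m : tr f.+1 m.+1 = [seq Node x.1 x.2 | i <- iota 0 m.+1,
                  x <- [seq (l, r) | l <- tr f i, r <- tr f (m - i)]].
Proof. by []. Qed.

Lemma tr_mem f : forall n, (n < f)%N -> forall t, (t \in tr f n) = (bt_size t == n).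
Proof.
elim: f => [|f IH] [|m] // hm t.
- by rewrite inE; case: t.
- rewrite tr_S; apply/idP/idP.
  + case/allpairsPdep => i [[l r] [hi hx ->]] /=.
    case/allpairsP: hx => [[l' r']] /= [hl hr [-> ->]].
    rewrite mem_iota /= add0n in hi.
    have hmf : (m < f)%N by [].
    rewrite (IH i) ?(leq_trans hi) // in hl.
    rewrite (IH (m - i)%N) ?(leq_ltn_trans (leq_subr _ _) hmf) // in hr.
    by rewrite /= (eqP hl) (eqP hr) subnKC // -ltnS.
  + case: t => [|lt rt] //; rewrite [bt_size _]/= => /eqP [hs].
    apply/allpairsPdep; exists (bt_size lt), (lt, rt); split => //.
      by rewrite mem_iota add0n ltnS -hs leq_addr.
    apply/allpairsP; exists (lt, rt); split => //.
      rewrite IH //=; apply: (leq_ltn_trans _ (hm : (m < f)%N)); by rewrite -hs leq_addr.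
    rewrite /= -hs addKn IH //; apply: (leq_ltn_trans _ (hm : (m < f)%N)); by rewrite -hs leq_addl.
Qed.

Lemma tr_uniq f : forall n, (n < f)%N -> uniq (tr f n).
Proof.
elim: f => [|f IH] [|m] // hm.
rewrite tr_S; apply: allpairs_uniq_dep.
- exact: iota_uniq.
- move=> i; rewrite mem_iota add0n => /andP [_ hi].
  have hmf : (m < f)%N by [].
  apply: allpairs_uniq.
  + by apply: IH; apply: leq_ltn_trans hmf; rewrite -ltnS.
  + by apply: IH; apply: leq_ltn_trans (leq_subr _ _) hmf.
  + by move=> [a b] [c d] _ _.
- have hmf : (m < f)%N by [].
  move=> p q /allpairsPdep [x [y [hx hy ->]]] /allpairsPdep [x' [y' [hx' hy' ->]]] /= [e1 e2].
  case/allpairsP: hy e1 e2 => [[a b] [ha _ ->]] /=.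
  case/allpairsP: hy' => [[a' b'] [ha' _ ->]] /= ea eb.
  subst a' b'.
  rewrite mem_iota add0n in hx; rewrite mem_iota add0n in hx'.
  rewrite tr_mem in ha; last by apply: leq_ltn_trans hmf; rewrite -ltnS.
  rewrite tr_mem in ha'; last by apply: leq_ltn_trans hmf; rewrite -ltnS.
  move/eqP: ha => ha; move/eqP: ha' => ha'; subst x x'; done.
Qed.

Definition g (n : nat) : rat := (2 ^ n * n.+1 ^ n.-1)%N%:R / (n`!)%:R.

Lemma fact_neq0 n : (n`!)%:R != 0 :> rat.
Proof. by rewrite pnatr_eq0 -lt0n fact_gt0. Qed.

Lemma g_prod m i : (i <= m)%N ->
  g i * g (m - i) = (2 ^ m)%N%:R / (m`!)%:R *
    ('C(m, i) * (i.+1)^(i.-1) * (m - i).+1^((m - i).-1))%N%:R.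
Proof.
move=> hi; rewrite /g.
have e : (2 ^ m = 2 ^ i * 2 ^ (m - i))%N by rewrite -expnD subnKC.
rewrite e -(bin_fact hi) !natrM.
have h1 := fact_neq0 i. have h2 := fact_neq0 (m - i).
have h3 : 'C(m, i)%:R != 0 :> rat by rewrite pnatr_eq0 -lt0n bin_gt0.
field. by rewrite h1 h2 h3.
Qed.

Lemma g_rec m : g m.+1 = (1 + (m.+1)%:R^-1) * \sum_(i < m.+1) g i * g (m - i).
Proof.
have -> : \sum_(i < m.+1) g i * g (m - i) = (2 ^ m)%N%:R / (m`!)%:R * Aval m.
  rewrite /Aval mulr_sumr; apply: eq_bigr => i _; apply: g_prod; by rewrite -ltnS.
have ht : m.+2%:R != 0 :> rat by rewrite pnatr_eq0.
have -> : Aval m = 2 * m.+2%:R ^+ m / m.+2%:R by rewrite -A_id mulfK.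
have h1 : m.+1%:R != 0 :> rat by rewrite pnatr_eq0.
have h2 := fact_neq0 m.
rewrite /g factS /= !natrM !natrX.
have -> : m.+2%:R = m.+1%:R + 1 :> rat by rewrite natr1.
rewrite natr1 exprS.
set y := (m.+2%:R ^+ m). set z := (2 ^+ m). set a := m.+1%:R.
have ha : a + 1 != 0 by rewrite /a natr1.
field.
have p : 0 <= m%:R :> rat := ler0n _ _.
by rewrite h2 /=; apply/andP; split; apply/negP; move/eqP; lra.
Qed.

Lemma tr_sum f : forall n, (n < f)%N -> \sum_(t <- tr f n) hook_prod t = g n.
Proof.
elim: f => [|f IH] [|m] // hm.
  by rewrite /= big_cons big_nil /hook_prod /= big_nil /g /= addr0 divr1.
have hmf : (m < f)%N by [].
rewrite tr_S big_allpairs_dep g_rec mulr_sumr.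
rewrite -[RHS](big_mkord xpredT (fun i => (1 + m.+1%:R^-1) * (g i * g (m - i)))).
rewrite /index_iota subn0 big_seq [RHS]big_seq; apply: eq_bigr => i.
rewrite mem_iota add0n /= => hi.
have hif : (i < f)%N by apply: leq_ltn_trans hmf; rewrite -ltnS.
have hmif : (m - i < f)%N by apply: leq_ltn_trans (leq_subr _ _) hmf.
rewrite big_allpairs -(IH i hif) -(IH (m - i)%N hmif).
rewrite big_distrlr /= mulr_sumr.
rewrite big_seq [RHS]big_seq; apply: eq_bigr => l hl.
rewrite mulr_sumr big_seq [RHS]big_seq; apply: eq_bigr => r hr /=.
rewrite tr_mem // in hl; rewrite tr_mem // in hr.
rewrite hp_node (eqP hl) (eqP hr) subnKC; last by rewrite -ltnS.
by rewrite mulrA.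
Qed.

Theorem theorem1 (n : nat) (s : seq bintree) :
  (1 <= n)%N ->
  uniq s ->
  (forall t : bintree, (t \in s) = (bt_size t == n)) ->
  ((n.+1 ^ n.-1)%N%:R : rat)
    = \sum_(t <- s) ((n`!)%:R / (2 ^ n)%N%:R) * hook_prod t.
Proof.
move=> _ hu hs.
have hp : perm_eq s (tr n.+1 n).
  apply: uniq_perm => //; first exact: tr_uniq.
  by move=> t; rewrite hs tr_mem.
rewrite (perm_big _ hp) -mulr_sumr tr_sum // /g natrM.
have h1 := fact_neq0 n.
have h2 : (2 ^ n)%N%:R != 0 :> rat by rewrite pnatr_eq0 expn_eq0.
set a := (2 ^ n)%N%:R in h2 *. set b := (n`!)%:R in h1 *. set c := (n.+1 ^ n.-1)%N%:R.
field. by rewrite h1 h2.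
Qed.
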